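(* Let $\mathbb{K}$ be a field, let $P_1, P_2 \in \mathbb{K}[X]$ be irreducible, let $f : \mathbb{K}[X]/(P_1) \to \mathbb{K}[X]/(P_2)$ be a ring isomorphism stabilizing $\mathbb{K}$, and let $n > 1$ be an integer. Then $S_f$ is coprime to $P_2$ if and only if $f_{X,n} : \mathbb{K}[X]/(P_1^n) \to \mathbb{K}[X]/(P_2^n)$ is an isomorphism.
   Context: A ring homomorphism $f : A \to B$ between $\mathbb{K}$-algebras stabilizes $\mathbb{K}$ if there is a field automorphism $\sigma_f$ of $\mathbb{K}$ with $f(a) = \sigma_f(a)$ for all $a \in \mathbb{K}$. For a field automorphism $\sigma$ of $\mathbb{K}$, $\sigma^X$ is the ring automorphism of $\mathbb{K}[X]$ applying $\sigma$ to coefficients; $A\circ Q$ denotes $A(Q(X))$. For a ring isomorphism $f : \mathbb{K}[X]/(P_1) \to \mathbb{K}[X]/(P_2)$ stabilizing $\mathbb{K}$: $Q_f$ is the unique polynomial of degree $< \deg P_2$ such that $f$ sends the class of $X$ to the class of $Q_f$ (then $f(\text{class of }P) = \text{class of } \sigma_f^X(P)\circ Q_f$); $S_f\in\mathbb{K}[X]$ is the polynomial with $\sigma_f^X(P_1)\circ Q_f = S_f P_2$ (it exists because $\sigma_f^X(P_1)\circ Q_f$ is divisible by $P_2$); and $f_{X,n} : \mathbb{K}[X]/(P_1^n) \to \mathbb{K}[X]/(P_2^n)$ is the well-defined ring homomorphism sending the class of $P$ to the class of $\sigma_f^X(P)\circ Q_f$. *)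

(* Defs.v *)
From HB Require Import structures.
From mathcomp Require Import all_boot all_order all_algebra.
Set Implicit Arguments. Unset Strict Implicit. Unset Printing Implicit Defensive.
Import GRing.Theory.
Local Open Scope ring_scope.

(* The ideal (P) of K[X] equals the ideal generated by the monic associate of P.
   MathComp's {poly %/ h} quotients by h only when h is monic of size > 1
   (otherwise by 'X), so we quotient by the monic associate. *)
Definition monicize (K : fieldType) (P : {poly K}) : {poly K} :=
  (lead_coef P)^-1 *: P.

Definition qring (K : fieldType) (P : {poly K}) := {poly %/ monicize P}.

Definition cls (K : fieldType) (P : {poly K}) (q : {poly K}) : qring P :=
  in_qpoly (monicize P) q.

(* Q_f : the unique polynomial of degree < deg P2 whose class is f(class of X),
   i.e. the canonical (reduced) representative of f (class of X). *)
Definition Qf (K : fieldType) (P1 P2 : {poly K}) (f : qring P1 -> qring P2)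
  : {poly K} := (f (cls P1 'X) : {poly K}).

(* S_f : the polynomial with sigma^X(P1) o Q_f = S_f * P2 *)
Definition Sf (K : fieldType) (P1 P2 : {poly K}) (sigma : K -> K)
  (f : qring P1 -> qring P2) : {poly K} :=
  (map_poly sigma P1 \Po Qf f) %/ P2.

Definition fXn (K : fieldType) (P1 P2 : {poly K}) (n : nat) (sigma : K -> K)
  (f : qring P1 -> qring P2) : qring (P1 ^+ n) -> qring (P2 ^+ n) :=
  fun q => cls (P2 ^+ n) (map_poly sigma (q : {poly K}) \Po Qf f).

(* Main.v *)
Require Import Defs.
From HB Require Import structures.
From mathcomp Require Import all_boot all_order all_algebra.
From mathcomp Require Import ring.
From Stdlib Require Import ClassicalEpsilon.
Import GRing.Theory.
Local Open Scope ring_scope.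

Section Cls.
Variable K : fieldType.

Lemma monicize_monic (P : {poly K}) : P != 0 -> monicize P \is monic.
Proof. by move=> P0; rewrite /monicize monicE lead_coefZ mulVf // lead_coef_eq0. Qed.

Lemma size_monicize (P : {poly K}) : P != 0 -> size (monicize P) = size P.
Proof. by move=> P0; rewrite /monicize size_scale // invr_eq0 lead_coef_eq0. Qed.

Lemma mk_monicize (P : {poly K}) : (1 < size P)%N -> mk_monic (monicize P) = monicize P.
Proof.
move=> sP; have P0 : P != 0 by rewrite -size_poly_gt0 ltnW.
by rewrite /mk_monic size_monicize // sP monicize_monic // -size_poly_gt0 ltnW.
Qed.

Lemma clsE (P : {poly K}) q : (1 < size P)%N -> (cls P q : {poly K}) = q %% P.
Proof.
move=> sP; have P0 : P != 0 by rewrite -size_poly_gt0 ltnW.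
rewrite /cls /in_qpoly /= mk_monicize // -(Pdiv.IdomainMonic.modpE (monicize_monic _ P0)).
by rewrite /monicize modpZr // invr_eq0 lead_coef_eq0.
Qed.

Lemma cls_eq (P : {poly K}) a b : (1 < size P)%N ->
  (cls P a = cls P b) <-> (P %| a - b).
Proof.
move=> sP; have E x : (cls P x : {poly K}) = x %% P := clsE P x sP.
split.
  move=> h; have := congr1 (fun y : qring P => (y : {poly K})) h.
  by rewrite !E => e; rewrite /dvdp modpD modpN e subrr.
move=> h; apply: val_inj; have := E a; have := E b; move=> /= -> ->.
by apply/eqP; rewrite -subr_eq0 -modpN -modpD.
Qed.

Lemma clsK (P : {poly K}) (x : qring P) : (1 < size P)%N -> cls P (x : {poly K}) = x.
Proof.
move=> sP; apply: val_inj; have := clsE P (x : {poly K}) sP; move=> /= ->.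
apply: modp_small.
apply: leq_trans (size_mk_monic x) _.
by rewrite mk_monicize // size_monicize // -size_poly_gt0 ltnW.
Qed.

Lemma clsD (P : {poly K}) a b : cls P (a + b) = cls P a + cls P b.
Proof. exact: in_qpolyD. Qed.
Lemma clsM (P : {poly K}) a b : cls P (a * b) = cls P a * cls P b.
Proof. exact: in_qpolyM. Qed.
Lemma cls0 (P : {poly K}) : cls P 0 = 0.
Proof. exact: in_qpoly0. Qed.

Lemma size_exp_gt1 (P : {poly K}) n : (1 < size P)%N -> (0 < n)%N -> (1 < size (P ^+ n))%N.
Proof.
move=> sP n0; have := size_exp P n.
case: (size (P ^+ n)) => //= [|m]; last first.
  move=> ->; rewrite ltnS muln_gt0 n0 andbT; by case: (size P) sP.
move=> /esym /eqP; rewrite muln_eq0 (negbTE (lt0n_neq0 n0)) orbF.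
by case: (size P) sP => // -[].
Qed.

End Cls.

Section Main.
Variables (K : fieldType) (P1 P2 : {poly K}).
Variables (s1 : (1 < size P1)%N) (s2 : (1 < size P2)%N).
Variable irr2 : irreducible_poly P2.
Variable f : {rmorphism qring P1 -> qring P2}.
Variable f_inj : injective f.
Variable f_surj : forall y, exists x, f x = y.
Variable sigma : {rmorphism K -> K}.
Variable f_stab : forall a : K, f (cls P1 a%:P) = cls P2 (sigma a)%:P.

Definition F (p : {poly K}) := map_poly sigma p \Po Qf f.

Lemma FD a b : F (a + b) = F a + F b.
Proof. by rewrite /F rmorphD comp_polyD. Qed.
Lemma FB a b : F (a - b) = F a - F b.
Proof. by rewrite /F rmorphB comp_polyB. Qed.
Lemma FM a b : F (a * b) = F a * F b.
Proof. by rewrite /F rmorphM comp_polyM. Qed.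
Lemma FX a k : F (a ^+ k) = F a ^+ k.
Proof. by rewrite /F rmorphXn /= (rmorphXn (comp_poly (Qf f))). Qed.
Lemma F0 : F 0 = 0.
Proof. by rewrite /F rmorph0 comp_poly0. Qed.

Lemma f_cls p : f (cls P1 p) = cls P2 (F p).
Proof.
elim/poly_ind: p => [|p c IH]; first by rewrite F0 !cls0 rmorph0.
rewrite clsD clsM rmorphD rmorphM IH f_stab.
have -> : f (cls P1 'X) = cls P2 (Qf f) by rewrite /Qf clsK.
rewrite -clsM -clsD /F rmorphD rmorphM /= map_polyX map_polyC.
by rewrite comp_polyD comp_polyM comp_polyX comp_polyC.
Qed.

Lemma P2_dvd : P2 %| F P1.
Proof.
have := f_cls P1.
have -> : cls P1 P1 = 0 by rewrite -(cls0 _ P1); apply/cls_eq => //; rewrite subr0.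
rewrite rmorph0 -(cls0 _ P2) => /esym /cls_eq => /(_ s2); by rewrite subr0.
Qed.

Definition S := F P1 %/ P2.
Lemma SP : F P1 = S * P2.
Proof. by rewrite /S divpK // P2_dvd. Qed.

Lemma Fcong k a b : P1 ^+ k %| a - b -> P2 ^+ k %| F a - F b.
Proof.
move=> /dvdpP [c e]; rewrite -FB e FM FX SP exprMn mulrA.
exact: dvdp_mulIr.
Qed.


Lemma inj_k (cop : coprimep S P2) k p : P2 ^+ k %| F p -> P1 ^+ k %| p.
Proof.
elim: k p => [|k IH] p h; first by rewrite expr0 dvd1p.
have hk : P2 ^+ k %| F p by apply: dvdp_trans h; apply: dvdp_exp2l; exact: leqnSn.
have /dvdpP [r er] := IH p hk.
move: h; rewrite er FM FX SP exprMn mulrA exprS dvdp_mul2r; last first.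
  by rewrite expf_neq0 // -size_poly_gt0 ltnW.
rewrite Gauss_dvdpl; last by rewrite coprimep_sym coprimep_expl.
move=> hr.
have : f (cls P1 r) = f (cls P1 0).
  by rewrite !f_cls F0; apply/cls_eq => //; rewrite !subr0.
move=> /f_inj /(cls_eq _ _ _ _ s1); rewrite subr0 => h1.
by rewrite exprS dvdp_mul2r // expf_neq0 // -size_poly_gt0 ltnW.
Qed.

Lemma surj_k (cop : coprimep S P2) k t : exists p, P2 ^+ k %| t - F p.
Proof.
elim: k => [|k [p hp]]; first by exists 0; rewrite expr0 dvd1p.
have /dvdpP [E eE] := hp.
have /Bezout_eq1_coprimepP [[u v] /= euv] := coprimep_expl k cop.
have [x fx] := f_surj (cls P2 (u * E)).
have hh : P2 %| F (x : {poly K}) - u * E.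
  by apply/cls_eq => //; rewrite -f_cls clsK.
have /dvdpP [w ew] := hh.
exists (p + (x : {poly K}) * P1 ^+ k).
apply/dvdpP; exists (E * v - w * S ^+ k).
rewrite FD FM FX SP exprMn exprS.
have -> : t = E * P2 ^+ k + F p by rewrite -eE subrK.
have -> : F (x : {poly K}) = w * P2 + u * E by rewrite -ew subrK.
apply/subr0_eq.
rewrite [X in X = 0](_ : _ = E * P2 ^+ k * (1 - (u * S ^+ k + v * P2))).
  by rewrite euv subrr mulr0.
ring.
Qed.

Lemma notcop : irreducible_poly P2 -> ~~ coprimep S P2 -> P2 %| S.
Proof.
move=> irr nc; have e := irr.2 (gcdp S P2) nc (dvdp_gcdr S P2).
by rewrite -(eqp_dvdl _ e) dvdp_gcdl.
Qed.

End Main.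

Theorem mainTheorem10 (K : fieldType) (P1 P2 : {poly K})
  (irr1 : irreducible_poly P1) (irr2 : irreducible_poly P2)
  (f : {rmorphism qring P1 -> qring P2}) (f_bij : bijective f)
  (sigma : {rmorphism K -> K}) (sigma_bij : bijective sigma)
  (f_stab : forall a : K, f (cls P1 a%:P) = cls P2 (sigma a)%:P)
  (n : nat) (hn : (1 < n)%N) :
  coprimep (@Sf K P1 P2 sigma f) P2 <-> bijective (@fXn K P1 P2 n sigma f).
Proof.
have hnn : (n <= n.-1 + n.-1)%N.
  by case: n hn => // -[] // m _; rewrite /= addnS ltnS leq_addr.
have hn1 : (n <= n.-1)%N = false.
  by case: n hn {hnn} => // m _; rewrite ltnn.
have s1 := irr1.1; have s2 := irr2.1.
have n0 : (0 < n)%N by apply: ltnW.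
have sn1 := size_exp_gt1 _ _ n s1 n0; have sn2 := size_exp_gt1 _ _ n s2 n0.
have f_inj : injective f := bij_inj f_bij.
have f_surj : forall y, exists x, f x = y.
  by case: f_bij => g _ gK y; exists (g y); rewrite gK.
change (coprimep (S K P1 P2 f sigma) P2 <-> bijective (@fXn K P1 P2 n sigma f)).
have fXnE x : @fXn K P1 P2 n sigma f x = cls (P2 ^+ n) (F K P1 P2 f sigma (x : {poly K})).
  by [].
have P1ne : P1 != 0 by rewrite -size_poly_gt0 ltnW.
split => [cop|].
  have inj : injective (@fXn K P1 P2 n sigma f).
    move=> x y; rewrite !fXnE => /(cls_eq _ _ _ _ sn2).
    rewrite -FB => /(inj_k _ _ _ s1 s2 _ f_inj _ f_stab cop) h.
    by rewrite -(clsK _ _ x sn1) -(clsK _ _ y sn1); apply/cls_eq.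
  have surj : forall y, exists x, @fXn K P1 P2 n sigma f x = y.
    move=> y; have [p hp] := surj_k _ _ _ s1 s2 _ f_surj _ f_stab cop n (y : {poly K}).
    exists (cls (P1 ^+ n) p); rewrite fXnE -[RHS](clsK _ _ y sn2).
    apply/cls_eq => //.
    set a := ((cls (P1 ^+ n) p) : {poly K}).
    have ha : P1 ^+ n %| a - p by apply/cls_eq => //; rewrite /a clsK.
    have := Fcong _ _ _ s1 s2 _ _ f_stab _ _ _ ha => hb.
    have -> : F K P1 P2 f sigma a - (y : {poly K}) =
      (F K P1 P2 f sigma a - F K P1 P2 f sigma p) - ((y : {poly K}) - F K P1 P2 f sigma p).
      by ring.
    by rewrite dvdp_sub.
  exists (fun y => proj1_sig (constructive_indefinite_description _ (surj y))).
    by move=> x; apply: inj; rewrite (proj2_sig (constructive_indefinite_description _ (surj _))).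
  by move=> y; rewrite (proj2_sig (constructive_indefinite_description _ (surj y))).
move=> [g gK _]; have fi := can_inj gK.
apply/negPn/negP => nc; have d := notcop _ _ _ _ _ irr2 nc.
set x := cls (P1 ^+ n) (P1 ^+ n.-1).
have hx : @fXn K P1 P2 n sigma f x = @fXn K P1 P2 n sigma f (cls (P1 ^+ n) 0).
  rewrite !fXnE; apply/cls_eq => //.
  have h1 : P1 ^+ n %| (x : {poly K}) - P1 ^+ n.-1 by apply/cls_eq => //; rewrite /x clsK.
  have h2 : P1 ^+ n %| (cls (P1 ^+ n) 0 : {poly K}) - 0 by apply/cls_eq => //; rewrite clsK.
  have e1 := Fcong _ _ _ s1 s2 _ _ f_stab _ _ _ h1; have e2 := Fcong _ _ _ s1 s2 _ _ f_stab _ _ _ h2.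
  have e3 : P2 ^+ n %| F K P1 P2 f sigma (P1 ^+ n.-1) - F K P1 P2 f sigma 0.
    rewrite F0 subr0 FX (SP _ _ _ s1 s2 _ _ f_stab).
    apply: (@dvdp_trans _ ((P2 * P2) ^+ n.-1)).
      by rewrite exprMn -exprD dvdp_exp2l.
    by apply: dvdp_exp2r; apply: dvdp_mul.
  set A := F K P1 P2 f sigma (x : {poly K}); set B := F K P1 P2 f sigma (cls (P1 ^+ n) 0 : {poly K}).
  set C := F K P1 P2 f sigma (P1 ^+ n.-1); set D := F K P1 P2 f sigma 0.
  have -> : A - B = (A - C) + (C - D) - (B - D) by ring.
  by rewrite dvdp_sub // dvdp_add.
by move: (fi _ _ hx) => /(cls_eq _ _ _ _ sn1); rewrite subr0 dvdp_Pexp2l // hn1.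
Qed.
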